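(* Under Friends Appreciation, let $\mathcal{N}_1=\{i\in\mathcal{N}: |F_i|=1\}$ and let $G_1^f=(\mathcal{N},F_1)$ with $F_1=\{(i,j): i\in\mathcal{N}_1,\ j\in F_i\}$. Let $\pi$ be the partition of $\mathcal{N}$ into the vertex sets of the weakly connected components of $G_1^f$ (this is the unique minimal-by-refinement partition guaranteeing $\textsc{oneF}$ for all agents in $\mathcal{N}_1$). Then for every $i\in\mathcal{N}_1$ we have $u_i(\pi)\ge\mathrm{opt}$, and $\pi(i)\subseteq\pi^*(i)$ for every partition $\pi^*$ maximizing the egalitarian welfare.
   Context: A friends-and-enemies instance consists of a set of agents $\mathcal{N}=\{1,\dots,n\}$ and, for each agent $i$, a nonempty set of friends $F_i\subseteq \mathcal{N}\setminus\{i\}$; the enemies of $i$ are $E_i=\mathcal{N}\setminus(F_i\cup\{i\})$. An outcome is a partition $\pi$ of $\mathcal{N}$; $\pi(i)$ is the coalition containing $i$. Under Friends Appreciation, $u_i(C)=|C\cap F_i|-\frac{1}{n}|C\cap E_i|$ for $C\ni i$, $u_i(\pi)=u_i(\pi(i))$, $\mathsf{ESW}(\pi)=\min_i u_i(\pi)$, and $\mathrm{opt}$ is the maximum $\mathsf{ESW}$. A coalition $C$ satisfies $\textsc{oneF}$ for agent $i\in C$ if $C\cap F_i\neq\emptyset$. A partition $\pi$ guarantees $\textsc{oneF}$ for $A\subseteq\mathcal{N}$ if every coalition satisfies $\textsc{oneF}$ for each of its members in $A$; it is minimal-by-refinement with this property if no coalition of $\pi$ can be split into several nonempty coalitions while the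 resulting partition still guarantees $\textsc{oneF}$ for $A$. *)

(* Defs.v *)
From HB Require Import structures.
From mathcomp Require Import all_boot all_order all_algebra.
Set Implicit Arguments. Unset Strict Implicit. Unset Printing Implicit Defensive.
Import Order.TTheory GRing.Theory Num.Theory.
Local Open Scope ring_scope.

Section FE.
Variable n : nat.
Variable F : 'I_n -> {set 'I_n}.

Definition enemies (i : 'I_n) : {set 'I_n} := ~: (F i :|: [set i]).

Definition uFA (i : 'I_n) (C : {set 'I_n}) : rat :=
  (#|C :&: F i|)%:R - (#|C :&: enemies i|)%:R / n%:R.

Definition is_partition (P : {set {set 'I_n}}) : bool := partition P [set: 'I_n].

Definition uP (P : {set {set 'I_n}}) (i : 'I_n) : rat := uFA i (pblock P i).

(* egalitarian welfare: min over agents. The seed n%:R is a strict upper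
   bound for all utilities (utility <= n-1), so it never affects the minimum
   when n >= 1. *)
Definition ESW (P : {set {set 'I_n}}) : rat :=
  \big[Num.min/n%:R]_(i : 'I_n) uP P i.

(* opt = maximum ESW over all partitions; seeded with the ESW of the grand
   coalition, itself a partition when n >= 1 *)
Definition opt : rat :=
  \big[Num.max/ESW [set [set: 'I_n]]]_(P : {set {set 'I_n}} | is_partition P) ESW P.

Definition optimal (P : {set {set 'I_n}}) : bool := is_partition P && (ESW P == opt).

Definition N1 : {set 'I_n} := [set i | #|F i| == 1%N].

Definition F1edge : rel 'I_n := fun i j => (i \in N1) && (j \in F i).
Definition weak_edge : rel 'I_n := fun i j => F1edge i j || F1edge j i.

Definition wcc_partition : {set {set 'I_n}} :=
  equivalence_partition (connect weak_edge) [set: 'I_n].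
End FE.

(* Main.v *)
Require Import Defs.
From HB Require Import structures.
From mathcomp Require Import all_boot all_order all_algebra.
Import Order.TTheory GRing.Theory Num.Theory.
Local Open Scope ring_scope.

Section Aux.
Variable n : nat.
Variable F : 'I_n -> {set 'I_n}.
Hypothesis HFi : forall i, i \notin F i.
Hypothesis HFne : forall i, F i != set0.

Lemma ESW_le P i : ESW F P <= uP F P i.
Proof.
rewrite /ESW (bigD1 i) //= ge_min lexx //.
Qed.

Lemma seed_le_opt : ESW F [set [set: 'I_n]] <= opt F.
Proof.
rewrite /opt; apply: (big_rec (fun x => ESW F [set [set: 'I_n]] <= x)) => //.
by move=> P x _ Hx; rewrite le_max Hx orbT.
Qed.

Lemma opt_attained (i0 : 'I_n) : exists P, optimal F P.
Proof.
rewrite /optimal.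
have : exists2 P, is_partition P & ESW F P = opt F.
  rewrite /opt; elim/big_ind: _ => [|x y [P1 h1 e1] [P2 h2 e2]|P HP].
  - exists [set [set: 'I_n]] => //.
    rewrite /is_partition /partition cover1 trivIset1 eqxx /= inE eq_sym.
    by apply/set0Pn; exists i0.
  - by case: (leP x y) => _; [exists P2|exists P1].
  - by exists P.
by case=> P h e; exists P; rewrite h e eqxx.
Qed.

Lemma uFA_setT_pos j : 0 < uFA F j [set: 'I_n].
Proof.
rewrite /uFA !setTI.
have hn : (0 < n)%N by case: j => m; case: n => // ?.
have hE : (#|enemies F j| < n)%N.
  rewrite -[n in (_ < n)%N]card_ord -cardsT; apply: proper_card; apply/properP; split.
    exact: subsetT.
  by exists j => //; rewrite !inE eqxx orbT.
have hF : (1 <= #|F j|)%N by rewrite card_gt0.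
rewrite subr_gt0 ltr_pdivrMr ?ltr0n //.
apply: (@lt_le_trans _ _ (n%:R)); first by rewrite ltr_nat.
rewrite -natrM ler_nat; by rewrite leq_pmull.
Qed.

Lemma ESW_seed_pos (i0 : 'I_n) : 0 < ESW F [set [set: 'I_n]].
Proof.
rewrite /ESW; elim/big_ind: _ => [|x y hx hy|j _].
- by rewrite ltr0n; case: i0 => m; case: n.
- by rewrite lt_min hx hy.
- have hP : pblock [set [set: 'I_n]] j = [set: 'I_n].
    by apply: def_pblock; rewrite ?trivIset1 ?inE.
  by rewrite /uP hP uFA_setT_pos.
Qed.


Lemma uFA_mono i (C1 C2 : {set 'I_n}) : C1 \subset C2 -> #|C1 :&: F i| = #|C2 :&: F i| ->
  uFA F i C2 <= uFA F i C1.
Proof.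
move=> s e; rewrite /uFA e lerD2l lerN2 ler_wpM2r ?invr_ge0 ?ler0n //.
by rewrite ler_nat subset_leq_card // setSI.
Qed.

Lemma wcc_mem i j : (j \in pblock (wcc_partition F) i) = connect (weak_edge F) i j.
Proof.
apply: pblock_equivalence_partition; rewrite ?inE //.
move=> x y z _ _ _; split; first exact: connect0.
move=> hxy; apply: same_connect => //.
by apply: sym_connect_sym => a b; rewrite /weak_edge orbC.
Qed.

Lemma sub_opt (i0 : 'I_n) P : optimal F P -> forall i,
  pblock (wcc_partition F) i \subset pblock P i.
Proof.
case/andP=> /and3P[/eqP cov triv _] /eqP eP i.
have optpos : 0 < opt F := lt_le_trans (ESW_seed_pos i0) (seed_le_opt).
have edge a b : F1edge F a b -> b \in pblock P a.
  case/andP; rewrite inE => /cards1P[f hf]; rewrite hf inE => /eqP ->.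
  have : 0 < uP F P a by rewrite -eP in optpos; exact: lt_le_trans optpos (ESW_le _ _).
  rewrite /uP /uFA hf; case: (boolP (f \in pblock P a)) => // hfa.
  have -> : pblock P a :&: [set f] = set0.
    by apply/setP=> x; rewrite !inE; by case: eqP => [->|]; rewrite ?andbF // (negbTE hfa).
  rewrite cards0 sub0r oppr_gt0 => h.
  have := divr_ge0 (ler0n rat #|pblock P a :&: enemies F a|) (ler0n rat n).
  by rewrite leNgt h.
have wedge a b : weak_edge F a b -> pblock P b = pblock P a.
  case/orP=> /edge h.
    by apply: same_pblock.
  by apply/esym/same_pblock.
apply/subsetP=> j; rewrite wcc_mem => /connectP[p hp ->].
elim: p i hp => [|a p IH] x /=; first by rewrite mem_pblock cov inE.
case/andP=> ha hp; rewrite -(wedge _ _ ha); exact: IH.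
Qed.
End Aux.

Theorem lemma2 (n : nat) (F : 'I_n -> {set 'I_n})
  (HFi : forall i, i \notin F i) (HFne : forall i, F i != set0) :
  forall i, i \in N1 F ->
    opt F <= uP F (wcc_partition F) i /\
    (forall Pstar : {set {set 'I_n}}, optimal F Pstar ->
       pblock (wcc_partition F) i \subset pblock Pstar i).
Proof.
move=> i Hi.
split; last by move=> P hP; exact: (@sub_opt n F HFne i P hP i).
have [P hP] := @opt_attained n F i.
have hs := @sub_opt n F HFne i P hP i.
move: (hP) => /andP[_ /eqP <-].
apply: (le_trans (@ESW_le n F P i)); rewrite /uP.
apply: (@uFA_mono n F) => //.
move: (Hi); rewrite inE => /cards1P[f hf].
have hf1 : f \in pblock (wcc_partition F) i.
  by rewrite wcc_mem; apply: connect1; rewrite /weak_edge /F1edge Hi hf inE eqxx.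
have hf2 := subsetP hs _ hf1.
rewrite hf; have E (C : {set 'I_n}) : f \in C -> C :&: [set f] = [set f].
  by move=> hC; apply/setIidPr; rewrite sub1set.
by rewrite !E.
Qed.
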